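(* Let $n=n_1+n_2+n_3=p+q$ with positive integers, let $G=U(n)$, let $L=U(n_1)\times U(n_2)\times U(n_3)$ and $H=U(p)\times U(q)$ be the natural block-diagonal subgroups of $G$, and let $G'=O(n)$. If $\min(p,q)\ge 3$ and $\min(n_1,n_2,n_3)\ge 2$, then $LG'H\subsetneq G$.
   Context: $LG'H=\{xyz:x\in L,y\in G',z\in H\}$. *)

(* Defs.v *)
From HB Require Import structures.
From mathcomp Require Import all_boot all_order all_algebra.
From mathcomp Require Import reals.
From mathcomp Require Import complex.
Set Implicit Arguments. Unset Strict Implicit. Unset Printing Implicit Defensive.
Import Order.TTheory GRing.Theory Num.Theory.
Local Open Scope ring_scope.

Definition adjmx (R : realType) m n (M : 'M[R[i]]_(m, n)) : 'M[R[i]]_(n, m) :=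
  (map_mx (@conjc R) M)^T.

Definition unitary_mx (R : realType) n (M : 'M[R[i]]_n) : Prop :=
  M *m adjmx M = 1%:M.

Definition in_On (R : realType) n (M : 'M[R[i]]_n) : Prop :=
  exists Q : 'M[R]_n, Q *m Q^T = 1%:M /\ M = map_mx (fun x : R => x%:C%C) Q.

Definition in_L (R : realType) (n1 n2 n3 n : nat) (e : (n1 + n2 + n3 = n)%N)
  (M : 'M[R[i]]_n) : Prop :=
  exists (A : 'M[R[i]]_n1) (B : 'M[R[i]]_n2) (C : 'M[R[i]]_n3),
    [/\ unitary_mx A, unitary_mx B, unitary_mx C &
      M = castmx (e, e) (block_mx (block_mx A 0 0 B) 0 0 C)].

Definition in_H (R : realType) (p q n : nat) (e : (p + q = n)%N)
  (M : 'M[R[i]]_n) : Prop :=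
  exists (A : 'M[R[i]]_p) (B : 'M[R[i]]_q),
    [/\ unitary_mx A, unitary_mx B & M = castmx (e, e) (block_mx A 0 0 B)].

(* Main.v *)
Require Import Defs.
From HB Require Import structures.
From mathcomp Require Import all_boot all_order all_algebra all_fingroup.
From mathcomp Require Import reals.
From mathcomp Require Import complex.
From mathcomp Require Import ring zify.
Import Order.TTheory GRing.Theory Num.Theory.
Local Open Scope ring_scope.

Lemma perm_ext (T : finType) (x0 : T) (xs ys : seq T) :
  uniq xs -> uniq ys -> size xs = size ys ->
  exists s : {perm T}, forall i, (i < size xs)%N -> s (nth x0 xs i) = nth x0 ys i.
Proof.
elim: xs ys => [|x xs IH] [|y ys] //=.
  by move=> _ _ _; exists 1%g.
case/andP=> hx hxs /andP[hy hys] [hsz].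
have [s hs] := IH ys hxs hys hsz.
exists (s * tperm (s x) y)%g => [[|i]] /=.
  by rewrite permM tpermL.
move=> hi; rewrite permM hs //; apply: tpermD.
- apply/eqP => /(congr1 (fun t => (s^-1)%g t)); rewrite !permK -hs // permK => E.
  by move: hx; rewrite E mem_nth.
- by apply/eqP => E; move: hy; rewrite E mem_nth // -hsz.
Qed.

Section S.
Variable R : realType.
Local Notation C := R[i].

Lemma adjmxM m n p (A : 'M[C]_(m,n)) (B : 'M[C]_(n,p)) :
  adjmx (A *m B) = adjmx B *m adjmx A.
Proof. by rewrite /adjmx map_mxM trmx_mul. Qed.

Lemma adjmx_tr m n (A : 'M[C]_(m,n)) : adjmx (A^T) = (adjmx A)^T.
Proof. by rewrite /adjmx -map_trmx. Qed.

Lemma adjmxK m n (A : 'M[C]_(m,n)) : adjmx (adjmx A) = A.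
Proof.
rewrite /adjmx map_trmx trmxK -map_mx_comp; apply/matrixP => i j.
by rewrite !mxE /= conjcK.
Qed.

Lemma adjmxE m n (A : 'M[C]_(m,n)) i j : adjmx A i j = ((A j i)^*)%C.
Proof. by rewrite !mxE. Qed.

Lemma unitaryC n (A : 'M[C]_n) : unitary_mx A -> adjmx A *m A = 1%:M.
Proof. exact: mulmx1C. Qed.

Lemma unitary_mul n (A B : 'M[C]_n) :
  unitary_mx A -> unitary_mx B -> unitary_mx (A *m B).
Proof.
rewrite /unitary_mx => hA hB.
by rewrite adjmxM mulmxA -(mulmxA A) hB mulmx1 hA.
Qed.

Lemma unitary_cast m n (e : m = n) (A : 'M[C]_m) :
  unitary_mx A -> unitary_mx (castmx (e, e) A).
Proof. by case: n / e; rewrite castmx_id. Qed.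

Lemma adjmx_block m1 m2 n1 n2 (A : 'M[C]_(m1,n1)) (B : 'M[C]_(m1,n2))
   (D : 'M[C]_(m2,n1)) (E : 'M[C]_(m2,n2)) :
  adjmx (block_mx A B D E) = block_mx (adjmx A) (adjmx D) (adjmx B) (adjmx E).
Proof. by rewrite /adjmx map_block_mx tr_block_mx. Qed.

Lemma adjmx0 m n : adjmx (0 : 'M[C]_(m,n)) = 0.
Proof. by rewrite /adjmx map_mx0 trmx0. Qed.

Lemma unitary_block m n (A : 'M[C]_m) (B : 'M[C]_n) :
  unitary_mx A -> unitary_mx B -> unitary_mx (block_mx A 0 0 B).
Proof.
rewrite /unitary_mx => hA hB.
rewrite adjmx_block !adjmx0 mulmx_block hA hB !mulmx0 !mul0mx !addr0 !add0r.
by rewrite scalar_mx_block.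
Qed.

Lemma unitary_On n (M : 'M[C]_n) : in_On M -> unitary_mx M.
Proof.
case=> Q [hQ ->].
have -> : (fun x : R => x%:C%C) = real_complex R by [].
have hadj : adjmx (map_mx (real_complex R) Q) = map_mx (real_complex R) Q^T.
  by apply/matrixP => i j; rewrite !mxE conjc_real.
by rewrite /unitary_mx hadj -map_mxM hQ map_mx1.
Qed.


Lemma mx0E m n i j : (0 : 'M[C]_(m,n)) i j = 0. Proof. by rewrite mxE. Qed.

Definition lblk (n1 n2 k : nat) : nat :=
  if (k < n1)%N then 0%N else if (k < n1 + n2)%N then 1%N else 2%N.

Lemma lblk0 n1 n2 k : (k < n1)%N -> lblk n1 n2 k = 0%N.
Proof. by rewrite /lblk => ->. Qed.
Lemma lblk1 n1 n2 k : (n1 <= k < n1 + n2)%N -> lblk n1 n2 k = 1%N.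
Proof. by case/andP => h1 h2; rewrite /lblk ltnNge h1 h2. Qed.
Lemma lblk2 n1 n2 k : (n1 + n2 <= k)%N -> lblk n1 n2 k = 2%N.
Proof. move=> h; rewrite /lblk ifF ?ifF //; apply/negbTE; rewrite -leqNgt; lia. Qed.
Lemma lblk_lt3 n1 n2 k : (lblk n1 n2 k < 3)%N.
Proof. by rewrite /lblk; case: ifP => //; case: ifP. Qed.

Lemma block3_entry n1 n2 n3 (A : 'M[C]_n1) (B : 'M[C]_n2) (D : 'M[C]_n3)
   (k l : 'I_(n1 + n2 + n3)) :
  lblk n1 n2 k != lblk n1 n2 l -> block_mx (block_mx A 0 0 B) 0 0 D k l = 0.
Proof.
move: k l; have := lblk0 n1 n2; have := lblk1 n1 n2; have := lblk2 n1 n2.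
move=> L2 L1 L0 k l.
case: (split_ordP k) => k1 ->; case: (split_ordP l) => l1 ->;
  rewrite ?block_mxEul ?block_mxEur ?block_mxEdl ?block_mxEdr ?mx0E //.
- case: (split_ordP k1) => k2 ->; case: (split_ordP l1) => l2 ->;
    rewrite ?block_mxEul ?block_mxEur ?block_mxEdl ?block_mxEdr ?mx0E //.
  + by rewrite /= !L0.
  + rewrite /= !L1 //; apply/andP; split; move: (ltn_ord k2) (ltn_ord l2); lia.
- by rewrite /= !L2 //; lia.
Qed.

Lemma block2_entry p q (A : 'M[C]_p) (B : 'M[C]_q) (k l : 'I_(p + q)) :
  (k < p)%N != (l < p)%N -> block_mx A 0 0 B k l = 0.
Proof.
case: (split_ordP k) => k1 ->; case: (split_ordP l) => l1 ->;
  rewrite ?block_mxEul ?block_mxEur ?block_mxEdl ?block_mxEdr ?mx0E //=.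
Qed.

Lemma in_L_props n1 n2 n3 n (e : (n1 + n2 + n3 = n)%N) (x : 'M[C]_n) :
  in_L e x -> unitary_mx x /\
    (forall k l : 'I_n, lblk n1 n2 k != lblk n1 n2 l -> x k l = 0).
Proof.
case=> A [B [D [hA hB hD ->]]]; split.
  by apply: unitary_cast; apply: unitary_block => //; apply: unitary_block.
by move=> k l H; rewrite castmxE; apply: block3_entry.
Qed.

Lemma in_H_props p q n (e : (p + q = n)%N) (x : 'M[C]_n) :
  in_H e x -> unitary_mx x /\
    (forall k l : 'I_n, (k < p)%N != (l < p)%N -> x k l = 0).
Proof.
case=> A [B [hA hB ->]]; split.
  by apply: unitary_cast; apply: unitary_block.
by move=> k l H; rewrite castmxE; apply: block2_entry.
Qed.


Lemma real_orth n (y : 'M[C]_n) : in_On y -> y *m y^T = 1%:M.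
Proof.
case=> Q [hQ ->].
have -> : (fun x : R => x%:C%C) = real_complex R by [].
by rewrite map_trmx -map_mxM hQ map_mx1.
Qed.

Lemma key_id n (g x y z : 'M[C]_n) : in_On y -> unitary_mx z ->
  g = x *m y *m z -> g *m (adjmx z *m (adjmx z)^T) *m g^T = x *m x^T.
Proof.
move=> /real_orth hy hz ->.
have hz' : (adjmx z)^T *m z^T = 1%:M by rewrite -trmx_mul hz trmx1.
rewrite !trmx_mul !mulmxA.
rewrite -(mulmxA (x *m y) z) hz mulmx1.
rewrite -(mulmxA (x *m y) (adjmx z)^T) hz' mulmx1.
by rewrite -(mulmxA x y) hy mulmx1.
Qed.

Lemma A_pattern (P : nat -> bool) n (z : 'M[C]_n) :
  (forall k l : 'I_n, P k != P l -> z k l = 0) ->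
  forall a b : 'I_n, P a != P b -> (adjmx z *m (adjmx z)^T) a b = 0.
Proof.
move=> hz a b hab; rewrite mxE; apply: big1 => c _; rewrite !mxE.
have [hca|hca] := eqVneq (P c) (P a).
  by rewrite (hz c b) ?conjc0 ?mulr0 // hca.
by rewrite (hz c a) ?conjc0 ?mul0r.
Qed.

Lemma T_pattern (P : nat -> nat) n (x : 'M[C]_n) :
  (forall k l : 'I_n, P k != P l -> x k l = 0) ->
  forall a b : 'I_n, P a != P b -> (x *m x^T) a b = 0.
Proof.
move=> hx a b hab; rewrite mxE; apply: big1 => c _; rewrite !mxE.
have [hca|hca] := eqVneq (P a) (P c).
  by rewrite (hx b c) ?mulr0 // -hca eq_sym.
by rewrite (hx a c) ?mul0r.
Qed.

Lemma A_unitary n (z : 'M[C]_n) : unitary_mx z ->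
  unitary_mx (adjmx z *m (adjmx z)^T).
Proof.
move=> hz; rewrite /unitary_mx adjmxM adjmx_tr adjmxK.
rewrite mulmxA -(mulmxA (adjmx z)) -trmx_mul hz trmx1 mulmx1.
exact: unitaryC.
Qed.

Lemma row0_contra n (A : 'M[C]_n) (r : 'I_n) :
  unitary_mx A -> (forall j, A r j = 0) -> False.
Proof.
move=> hA h0; have := congr1 (fun M : 'M[C]_n => M r r) hA.
rewrite mxE big1 ?mxE ?eqxx /=; first by move/eqP; rewrite eq_sym oner_eq0.
by move=> j _; rewrite h0 mul0r.
Qed.


Local Open Scope complex_scope.
Definition J : R[i] := Complex 0 1.
Lemma ii1 : J * J + 1 = 0.
Proof. by apply/eqP; rewrite eq_complex /= !(mul0r, mulr0, mul1r, mulr1, add0r, addr0, sub0r, addNr) eqxx. Qed.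

Lemma nat_cmul_eq0 (k : nat) (x : R[i]) : (0 < k)%N -> k%:R * x = 0 -> x = 0.
Proof.
move=> hk /eqP; rewrite mulf_eq0 => /orP[|/eqP //].
by rewrite pnatr_eq0 => /eqP hk0; rewrite hk0 in hk.
Qed.

Definition ment (i j : nat) : R[i] :=
  match i, j with
  | 0, 0 => 1 | 0, 1 => J | 0, 2 => J | 0, 3 => -1 | 0, 4 => 1 | 0, _ => - J
  | 1, 0 => 1 | 1, 1 => -1 | 1, 2 => 1 | 1, 3 => 1 | 1, 4 => - J | 1, _ => 1
  | 2, 0 => 1 | 2, 1 => - J | 2, 2 => -1 | 2, 3 => - J | 2, 4 => - J | 2, _ => -1
  | 3, 0 => 1 | 3, 1 => -1 | 3, 2 => - J | 3, 3 => J | 3, 4 => J | 3, _ => -1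
  | 4, 0 => 1 | 4, 1 => 1 | 4, 2 => -1 | 4, 3 => J | 4, 4 => -1 | 4, _ => 1
  | _, 0 => 1 | _, 1 => 1 | _, 2 => 1 | _, 3 => - J | _, 4 => J | _, _ => J
  end.

Definition E1 (u : nat -> R[i]) (i : nat) : R[i] :=
  ment i 0 * (if (0 < 3)%N then u 0%N else 0) + ment i 1 * (if (1 < 3)%N then u 1%N else 0) + ment i 2 * (if (2 < 3)%N then u 2%N else 0) + ment i 3 * (if (3 < 3)%N then u 3%N else 0) + ment i 4 * (if (4 < 3)%N then u 4%N else 0) + ment i 5 * (if (5 < 3)%N then u 5%N else 0).

Lemma alg1 (u : nat -> R[i]) (blk : nat) :
  (forall i, (i < 6)%N -> i./2 != blk -> E1 u i = 0) -> (blk < 3)%N -> u 0%N = 0.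
Proof.
move=> h; case: blk h => [|[|[|]]] // h _; apply: (@nat_cmul_eq0 10) => //.
- have K : 10 * u 0%N = ((-5) + (-5) * J) * E1 u 2 + (5 + 5 * J) * E1 u 3 + (10 + 0 * J) * E1 u 4 + (J * J + 1) * ((-5) * u 1%N + 5 * u 2%N).
    by rewrite /E1 /=; ring.
  by rewrite K !h // ii1 ?mulr0 ?mul0r ?addr0.
- have K : 10 * u 0%N = (5 + 0 * J) * E1 u 1 + (5 + 0 * J) * E1 u 4 + (J * J + 1) * (0).
    by rewrite /E1 /=; ring.
  by rewrite K !h // ii1 ?mulr0 ?mul0r ?addr0.
- have K : 10 * u 0%N = (3 + (-1) * J) * E1 u 0 + (3 + (-1) * J) * E1 u 1 + (4 + 2 * J) * E1 u 2 + (J * J + 1) * (3 * u 1%N + 1 * u 2%N).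
    by rewrite /E1 /=; ring.
  by rewrite K !h // ii1 ?mulr0 ?mul0r ?addr0.
Qed.

Definition Fz (f : nat -> nat -> R[i]) (a b : nat) : R[i] :=
  if (a < 3)%N == (b < 3)%N then f a b else 0.
Definition E (f : nat -> nat -> R[i]) (i j : nat) : R[i] :=
  (ment i 0 * Fz f 0 0 + ment i 1 * Fz f 1 0 + ment i 2 * Fz f 2 0 + ment i 3 * Fz f 3 0 + ment i 4 * Fz f 4 0 + ment i 5 * Fz f 5 0) * ment j 0 + (ment i 0 * Fz f 0 1 + ment i 1 * Fz f 1 1 + ment i 2 * Fz f 2 1 + ment i 3 * Fz f 3 1 + ment i 4 * Fz f 4 1 + ment i 5 * Fz f 5 1) * ment j 1 + (ment i 0 * Fz f 0 2 + ment i 1 * Fz f 1 2 + ment i 2 * Fz f 2 2 + ment i 3 * Fz f 3 2 + ment i 4 * Fz f 4 2 + ment i 5 * Fz f 5 2) * ment j 2 + (ment i 0 * Fz f 0 3 + ment i 1 * Fz f 1 3 + ment i 2 * Fz f 2 3 + ment i 3 * Fz f 3 3 + ment i 4 * Fz f 4 3 + ment i 5 * Fz f 5 3) * ment j 3 + (ment i 0 * Fz f 0 4 + ment i 1 * Fz f 1 4 + ment i 2 * Fz f 2 4 + ment i 3 * Fz f 3 4 + ment i 4 * Fz f 4 4 + ment i 5 * Fz f 5 4) * ment j 4 + (ment i 0 * Fz f 0 5 + ment i 1 * Fz f 1 5 + ment i 2 * Fz f 2 5 + ment i 3 * Fz f 3 5 + ment i 4 * Fz f 4 5 + ment i 5 *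 Fz f 5 5) * ment j 5.

Lemma alg2 (f : nat -> nat -> R[i]) :
  (forall i j, (i < 6)%N -> (j < 6)%N -> i./2 != j./2 -> E f i j = 0) ->
  [/\ f 0%N 0%N = 0, f 0%N 1%N = 0 & f 0%N 2%N = 0].
Proof.
move=> h.
have K0 : 24 * f 0%N 0%N = (2 + (-1) * J) * E f 0 2 + (1 + 0 * J) * E f 0 3 + (1 + (-1) * J) * E f 0 4 + (4 + 0 * J) * E f 0 5 + (0 + (-3) * J) * E f 1 2 + (3 + (-2) * J) * E f 1 3 + ((-1) + 1 * J) * E f 1 4 + (2 + (-2) * J) * E f 1 5 + (2 + 1 * J) * E f 2 0 + (2 + 1 * J) * E f 2 1 + (2 + 0 * J) * E f 2 4 + (4 + (-2) * J) * E f 2 5 + (1 + 2 * J) * E f 3 0 + ((-3) + 2 * J) * E f 3 1 + (0 + 2 * J) * E f 3 4 + (2 + 0 * J) * E f 3 5 + (1 + 3 * J) * E f 4 0 + (1 + (-1) * J) * E f 4 1 + (J * J + 1) * ((-10) * f 0%N 1%N + (-8) * f 0%N 2%N + 2 * f 1%N 0%N + 4 * f 1%N 1%N + 1 * f 1%N 2%N + 1 * f 1%N 2%N * J + 8 * f 2%N 0%N + 5 * f 2%N 1%N + 1 * f 2%N 1%N * J + 2 * f 2%N 2%N + 2 * f 2%N 2%N * J + (-2) * f 3%N 4%N + (-2) * f 3%N 4%N * J + 2 * f 3%N 5%N + 2 * f 3%N 5%N * J + 4 * f 4%N 3%N * J + 2 * f 4%N 4%N + (-2) * f 4%N 4%N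 * J + 3 * f 4%N 5%N + (-3) * f 4%N 5%N * J + (-4) * f 5%N 3%N + (-1) * f 5%N 4%N + 1 * f 5%N 4%N * J + 4 * f 5%N 5%N).
  by rewrite /E /Fz /=; ring.
have K1 : 24 * f 0%N 1%N = (2 + 0 * J) * E f 0 2 + (0 + (-2) * J) * E f 0 3 + (2 + 2 * J) * E f 0 4 + ((-2) + 0 * J) * E f 1 2 + ((-8) + 2 * J) * E f 1 3 + (2 + (-2) * J) * E f 1 4 + (4 + 0 * J) * E f 1 5 + (2 + 0 * J) * E f 2 0 + ((-2) + 0 * J) * E f 2 1 + (2 + 2 * J) * E f 2 4 + ((-2) + 2 * J) * E f 2 5 + ((-4) + 2 * J) * E f 3 0 + (4 + (-2) * J) * E f 3 1 + (2 + 2 * J) * E f 3 4 + (2 + (-2) * J) * E f 3 5 + ((-2) + (-6) * J) * E f 4 0 + ((-2) + 2 * J) * E f 4 1 + (J * J + 1) * (4 * f 0%N 1%N + 4 * f 0%N 2%N + 4 * f 1%N 0%N + 12 * f 1%N 1%N + 10 * f 1%N 2%N + (-2) * f 1%N 2%N * J + (-10) * f 2%N 1%N + 2 * f 2%N 1%N * J + (-12) * f 2%N 2%N + (-4) * f 3%N 3%N * J + 4 * f 3%N 4%N * J + (-12) * f 3%N 5%N + (-4) * f 4%N 3%N * J + 4 * f 4%N 4%N * J + (-2) * f 4%N 5%N + 6 * f 4%N 5%N * J + 4 * f 5%N 3%N + (-2) * f 5%N 4%N + (-2) * f 5%N 4%N * J + (-4) * f 5%N 5%N).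
  by rewrite /E /Fz /=; ring.
have K2 : 24 * f 0%N 2%N = (0 + 2 * J) * E f 0 2 + (2 + 0 * J) * E f 0 3 + ((-2) + 2 * J) * E f 0 4 + (0 + (-2) * J) * E f 1 2 + ((-2) + 0 * J) * E f 1 3 + ((-2) + (-2) * J) * E f 1 4 + (4 + 0 * J) * E f 1 5 + (0 + (-2) * J) * E f 2 0 + (0 + 2 * J) * E f 2 1 + ((-2) + 2 * J) * E f 2 4 + ((-2) + (-2) * J) * E f 2 5 + ((-2) + 0 * J) * E f 3 0 + (2 + 0 * J) * E f 3 1 + ((-2) + 2 * J) * E f 3 4 + (2 + 2 * J) * E f 3 5 + (2 + (-6) * J) * E f 4 0 + (2 + 2 * J) * E f 4 1 + (J * J + 1) * (8 * f 0%N 1%N + 8 * f 0%N 2%N + (-4) * f 1%N 0%N + 4 * f 1%N 1%N + 10 * f 1%N 2%N + (-2) * f 1%N 2%N * J + (-10) * f 2%N 1%N + 2 * f 2%N 1%N * J + (-4) * f 2%N 2%N + 4 * f 3%N 3%N * J + (-4) * f 3%N 4%N * J + (-4) * f 3%N 5%N + (-8) * f 3%N 5%N * J + 4 * f 4%N 3%N * J + (-4) * f 4%N 4%N * J + 6 * f 4%N 5%N + (-2) * f 4%N 5%N * J + 4 * f 5%N 3%N + (-2) * f 5%N 4%N + (-2) * f 5%N 4%N * J + (-4) * f 5%N 5%N).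
  by rewrite /E /Fz /=; ring.
split; apply: (@nat_cmul_eq0 24) => //.
- by rewrite K0 !h // ii1 ?mulr0 ?mul0r ?addr0.
- by rewrite K1 !h // ii1 ?mulr0 ?mul0r ?addr0.
- by rewrite K2 !h // ii1 ?mulr0 ?mul0r ?addr0.
Qed.


Lemma conjJ : (J^*)%C = - J.
Proof. by apply/eqP; rewrite eq_complex /= oppr0 !eqxx. Qed.

Lemma conjNJ : ((- J)^*)%C = J.
Proof. by apply/eqP; rewrite eq_complex /= !oppr0 ?opprK !eqxx. Qed.
Lemma conjN1 : ((- 1 : C)^*)%C = -1.
Proof. by apply/eqP; rewrite eq_complex /= !oppr0 ?opprK !eqxx. Qed.
Lemma conj1 : ((1 : C)^*)%C = 1.
Proof. by apply/eqP; rewrite eq_complex /= !oppr0 ?opprK !eqxx. Qed.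

Local Arguments conjc : simpl never.
Local Arguments J : simpl never.

Lemma JJ : J * J = -1.
Proof. by apply/eqP; rewrite eq_complex /= !mul0r mulr1 mul1r sub0r addr0 oppr0 !eqxx. Qed.

Definition Mx : 'M[C]_6 := \matrix_(i < 6, j < 6) ment i j.

Lemma Mx_unit : Mx *m adjmx Mx = 6%:R%:M.
Proof.
apply/matrixP => i j; rewrite !mxE.
rewrite !big_ord_recr big_ord0 /= !mxE.
case: i => [[|[|[|[|[|[|i]]]]]] Hi] //; case: j => [[|[|[|[|[|[|j]]]]]] Hj] //=;
  rewrite ?(conjJ, conjNJ, conjN1, conj1, mulrN, mulNr, opprK, mulr1, mul1r, JJ, mulr0, mulr1n).
all: try ring.
Qed.


Definition kc : C := ((Num.sqrt (6%:R : R))^-1)%:C%C.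

Lemma kc_real : (kc^*)%C = kc.
Proof. exact: conjc_real. Qed.

Lemma kc2 : kc * kc * 6%:R = 1.
Proof.
have hR : (Num.sqrt (6%:R : R))^-1 * (Num.sqrt (6%:R : R))^-1 * 6%:R = 1.
  rewrite -invfM -expr2 sqr_sqrtr ?ler0n // mulVf //.
  by rewrite pnatr_eq0.
by rewrite /kc -!rmorphM -(rmorph_nat (real_complex R)) -rmorphM hR rmorph1.
Qed.

Lemma kc_neq0 : kc != 0.
Proof. by apply/eqP => h; have := kc2; rewrite h !mul0r => /eqP; rewrite eq_sym oner_eq0. Qed.

Lemma G6_unit : unitary_mx (kc *: Mx).
Proof.
rewrite /unitary_mx /adjmx map_mxZ linearZ /= kc_real.
rewrite -scalemxAl -scalemxAr scalerA.
have -> : (map_mx (@conjc R) Mx)^T = adjmx Mx by [].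
by rewrite Mx_unit scale_scalar_mx kc2.
Qed.

Definition G0 m : 'M[C]_(6 + m) := block_mx (kc *: Mx) 0 0 1%:M.

Lemma G0_unit m : unitary_mx (G0 m).
Proof.
apply: unitary_block; first exact: G6_unit.
by rewrite /unitary_mx /adjmx map_mx1 trmx1 mulmx1.
Qed.


Lemma MXE (X : 'M[C]_6) (f : nat -> nat -> C) :
  (forall a b : 'I_6, X a b = Fz f a b) ->
  forall i j : 'I_6, (Mx *m X *m Mx^T) i j = E f i j.
Proof.
move=> hX i j; rewrite mxE !big_ord_recr big_ord0 !mxE.
rewrite !big_ord_recr !big_ord0 !mxE !hX /E /=.
ring.
Qed.

Lemma MXE1 m (Y : 'M[C]_(6, m)) (u : nat -> C) (k : 'I_m) :
  (forall a : 'I_6, Y a k = if (a < 3)%N then u a else 0) ->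
  forall i : 'I_6, (Mx *m Y) i k = E1 u i.
Proof.
move=> hY i; rewrite mxE !big_ord_recr big_ord0 !mxE !hY /E1 /=.
ring.
Qed.


Lemma inord_ord0 : (inord 0 : 'I_6) = ord0.
Proof. by apply: val_inj; rewrite /= inordK. Qed.

Lemma frame m n (e : (6 + m = n)%N) (A0 : 'M[C]_n) (hp : 'I_n -> bool)
    (lb : 'I_n -> nat) :
  (forall i : 'I_6, hp (cast_ord e (lshift m i)) = (i < 3)%N) ->
  (forall i : 'I_6, lb (cast_ord e (lshift m i)) = i./2) ->
  (forall k, (lb k < 3)%N) ->
  (forall a b, hp a != hp b -> A0 a b = 0) ->
  (forall k l, lb k != lb l ->
     (castmx (e, e) (G0 m) *m A0 *m (castmx (e, e) (G0 m))^T) k l = 0) ->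
  forall j, A0 (cast_ord e (lshift m ord0)) j = 0.
Proof.
case: n / e A0 hp lb => A0 hp lb; rewrite castmx_id cast_ord_id.
move=> Hhp Hlb Hlb3 HA HT.
have hpl (i : 'I_6) : hp (lshift m i) = (i < 3)%N by rewrite -Hhp cast_ord_id.
have lbl (i : 'I_6) : lb (lshift m i) = i./2 by rewrite -Hlb cast_ord_id.
have HP : G0 m *m A0 *m (G0 m)^T =
   block_mx (kc *: Mx *m ulsubmx A0 *m (kc *: Mx)^T) (kc *: Mx *m ursubmx A0)
            (dlsubmx A0 *m (kc *: Mx)^T) (drsubmx A0).
  rewrite /G0 -{1}[A0]submxK mulmx_block tr_block_mx !trmx0 trmx1 mulmx_block.
  by rewrite !mul0mx !mulmx0 !mul1mx !mulmx1 !addr0 !add0r.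
have hk := kc_neq0.
pose f (a b : nat) := ulsubmx A0 (inord a) (inord b).
have hX : forall a b : 'I_6, ulsubmx A0 a b = Fz f a b.
  move=> a b; rewrite /Fz; case: eqP => h.
    by rewrite /f !inord_val.
  by rewrite !mxE; apply: HA; rewrite !hpl; apply/eqP.
have core : forall i j : 'I_6, i./2 != j./2 -> (Mx *m ulsubmx A0 *m Mx^T) i j = 0.
  move=> i j hij; have := HT (lshift m i) (lshift m j).
  rewrite !lbl HP block_mxEul => /(_ hij).
  rewrite -scalemxAl linearZ /= -scalemxAl -scalemxAr scalerA mxE => /eqP.
  by rewrite mulf_eq0 mulf_eq0 (negbTE hk) /= => /eqP.
have [f00 f01 f02] : [/\ f 0%N 0%N = 0, f 0%N 1%N = 0 & f 0%N 2%N = 0].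
  apply: alg2 => i j hi hj hij.
  have -> : E f i j = E f (inord i : 'I_6) (inord j : 'I_6) by rewrite !inordK.
  by rewrite -(MXE _ _ hX) core // !inordK.
move=> j; case: (split_ordP j) => j' ->.
  have := hX ord0 j'; rewrite !mxE => ->.
  rewrite /Fz /=; case: j' => [[|[|[|k]]] Hk] //=; rewrite ?f00 ?f01 ?f02 //.
have [hpr|hpr] := boolP (hp (rshift 6 j')); last first.
  by apply: HA; rewrite hpl (negbTE hpr).
pose u (a : nat) := ursubmx A0 (inord a) j'.
have hY : forall a : 'I_6, ursubmx A0 a j' = if (a < 3)%N then u a else 0.
  move=> a; case: ifP => ha.
    by rewrite /u inord_val.
  by rewrite !mxE; apply: HA; rewrite hpl ha hpr.
have := @alg1 u (lb (rshift 6 j')).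
rewrite /u inord_ord0 !mxE; apply => // i hi hb.
have -> : E1 u i = E1 u (inord i : 'I_6) by rewrite inordK.
rewrite -(MXE1 _ _ _ _ hY); have := HT (lshift m (inord i)) (rshift 6 j').
rewrite lbl inordK // HP block_mxEur => /(_ hb).
rewrite -scalemxAl mxE => /eqP.
by rewrite mulf_eq0 (negbTE hk) /= => /eqP.
Qed.


Lemma perm_ext_fun (T : finType) k (f g : 'I_k -> T) :
  injective f -> injective g -> exists s : {perm T}, forall i, s (f i) = g i.
Proof.
move=> hf hg.
case: k f g hf hg => [|k] f g hf hg; first by exists 1%g => -[].
have := @perm_ext T (f ord0) (map f (enum 'I_k.+1)) (map g (enum 'I_k.+1)).
rewrite !map_inj_uniq // -enumT enum_uniq !size_map => /(_ isT isT erefl) [s hs].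
exists s => i; have := hs i; rewrite -enumT size_enum_ord ltn_ord => /(_ isT).
rewrite (nth_map ord0) ?size_enum_ord // (nth_map ord0) ?size_enum_ord //.
by rewrite nth_ord_enum.
Qed.

Lemma perm_conj_unit n (B : 'M[C]_n) (s t : {perm 'I_n}) :
  unitary_mx B -> unitary_mx (\matrix_(k, l) B (s^-1%g k) (t^-1%g l)).
Proof.
move=> hB; apply/matrixP => k l; rewrite !mxE.
rewrite (reindex_inj (@perm_inj _ t)) /=.
have := congr1 (fun M : 'M[C]_n => M (s^-1%g k) (s^-1%g l)) hB.
rewrite !mxE (inj_eq (@perm_inj _ _)) => <-.
by apply: eq_bigr => c _; rewrite !mxE !permK.
Qed.

Lemma perm_conj_prod n (B A : 'M[C]_n) (s t : {perm 'I_n}) (k l : 'I_n) :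
  ((\matrix_(k, l) B (s^-1%g k) (t^-1%g l)) *m A *m
     (\matrix_(k, l) B (s^-1%g k) (t^-1%g l))^T) (s k) (s l) =
  (B *m (\matrix_(a, b) A (t a) (t b)) *m B^T) k l.
Proof.
rewrite !mxE (reindex_inj (@perm_inj _ t)) /=; apply: eq_bigr => b _.
rewrite !mxE !permK (reindex_inj (@perm_inj _ t)) /=; congr (_ * _).
by apply: eq_bigr => a _; rewrite !mxE !permK.
Qed.


Definition rt (n1 n2 i : nat) : nat :=
  match i with 0 => 0 | 1 => 1 | 2 => n1 | 3 => n1 + 1 | 4 => n1 + n2
  | _ => n1 + n2 + 1 end.
Definition ct (p i : nat) : nat :=
  match i with 0 => 0 | 1 => 1 | 2 => 2 | 3 => p | 4 => p + 1 | _ => p + 2 end.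

Lemma part2 n1 n2 n3 p q n (eL : (n1 + n2 + n3 = n)%N) (eH : (p + q = n)%N) :
  (2 <= n1)%N -> (2 <= n2)%N -> (2 <= n3)%N -> (3 <= p)%N -> (3 <= q)%N ->
  exists g : 'M[C]_n, unitary_mx g /\
     ~ (exists x y z : 'M[C]_n,
          [/\ in_L eL x, in_On y, in_H eH z & g = x *m y *m z]).
Proof.
move=> h1 h2 h3 hp hq.
have e6 : (6 + (n - 6) = n)%N by lia.
set m := (n - 6)%N in e6.
pose fr (i : 'I_6) : 'I_n := cast_ord e6 (lshift m i).
have fr_inj : injective fr.
  by move=> i j /(congr1 val) /= /val_inj.
have rt_lt (i : 'I_6) : (rt n1 n2 i < n)%N.
  by case: i => [[|[|[|[|[|[|i]]]]]] Hi] //=; lia.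
have ct_lt (i : 'I_6) : (ct p i < n)%N.
  by case: i => [[|[|[|[|[|[|i]]]]]] Hi] //=; lia.
pose gr (i : 'I_6) : 'I_n := Ordinal (rt_lt i).
pose gc (i : 'I_6) : 'I_n := Ordinal (ct_lt i).
have gr_inj : injective gr.
  move=> i j /(congr1 val) /= H; apply: val_inj; move: H.
  by case: i => [[|[|[|[|[|[|i]]]]]] Hi] //; case: j => [[|[|[|[|[|[|j]]]]]] Hj] //=; lia.
have gc_inj : injective gc.
  move=> i j /(congr1 val) /= H; apply: val_inj; move: H.
  by case: i => [[|[|[|[|[|[|i]]]]]] Hi] //; case: j => [[|[|[|[|[|[|j]]]]]] Hj] //=; lia.
have [s hs] := @perm_ext_fun _ _ _ _ fr_inj gr_inj.
have [t ht] := @perm_ext_fun _ _ _ _ fr_inj gc_inj.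
pose B := castmx (e6, e6) (G0 m).
have hB : unitary_mx B by apply: unitary_cast; apply: G0_unit.
exists (\matrix_(k, l) B (s^-1%g k) (t^-1%g l)); split.
  exact: perm_conj_unit.
case=> x [y [z [hxL hyO hzH hg]]].
have [_ hx] := @in_L_props _ _ _ _ _ _ hxL.
have [hzu hz] := @in_H_props _ _ _ _ _ hzH.
have key := @key_id _ _ _ _ _ hyO hzu hg.
set A := adjmx z *m (adjmx z)^T in key.
have hAu : unitary_mx A := @A_unitary _ _ hzu.
have hA : forall a b : 'I_n, (a < p)%N != (b < p)%N -> A a b = 0.
  exact: (@A_pattern (fun k => (k < p)%N)).
have hT : forall a b : 'I_n, lblk n1 n2 a != lblk n1 n2 b -> (x *m x^T) a b = 0.
  exact: (@T_pattern (lblk n1 n2)).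
have Hfr := @frame m n e6 (\matrix_(a, b) A (t a) (t b))
   (fun a => (t a < p)%N) (fun k => lblk n1 n2 (s k)).
have Z : forall j, (\matrix_(a, b) A (t a) (t b)) (fr ord0) j = 0.
  apply: Hfr.
  - move=> i; rewrite /= -/(fr i) ht /=.
    by case: i => [[|[|[|[|[|[|i]]]]]] Hi] //=; apply/idP/idP; lia.
  - move=> i; rewrite /= -/(fr i) hs /=.
    case: i => [[|[|[|[|[|[|i]]]]]] Hi] //=.
    + by rewrite lblk0 //; lia.
    + by rewrite lblk0 //; lia.
    + by rewrite lblk1 //; apply/andP; split; lia.
    + by rewrite lblk1 //; apply/andP; split; lia.
    + by rewrite lblk2 //; lia.
    + by rewrite lblk2 //; lia.
  - by move=> k; apply: lblk_lt3.
  - by move=> a b hab; rewrite mxE; apply: hA.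
  - move=> k l hkl; rewrite -(@perm_conj_prod n B A s t k l) key; exact: hT.
apply: (@row0_contra n A (t (fr ord0)) hAu) => j.
by have := Z (t^-1%g j); rewrite mxE permKV.
Qed.

End S.

Theorem proposition6p5 (R : realType) (n1 n2 n3 p q n : nat)
  (eL : (n1 + n2 + n3 = n)%N) (eH : (p + q = n)%N) :
  (0 < n1)%N -> (0 < n2)%N -> (0 < n3)%N -> (0 < p)%N -> (0 < q)%N ->
  (3 <= minn p q)%N -> (2 <= minn n1 (minn n2 n3))%N ->
  (* L G' H is a subset of G = U(n) ... *)
  (forall x y z : 'M[R[i]]_n, in_L eL x -> in_On y -> in_H eH z ->
     unitary_mx (x *m y *m z)) /\
  (* ... and a proper one *)
  (exists g : 'M[R[i]]_n, unitary_mx g /\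
     ~ (exists x y z : 'M[R[i]]_n,
          [/\ in_L eL x, in_On y, in_H eH z & g = x *m y *m z])).
Proof.
move=> _ _ _ _ _ hpq hn; split.
  move=> x y z hx hy hz.
  apply: unitary_mul; first apply: unitary_mul.
  - by case: (@in_L_props _ _ _ _ _ _ _ hx).
  - exact: (@unitary_On R _ _ hy).
  - by case: (@in_H_props _ _ _ _ _ _ hz).
apply: part2; lia.
Qed.
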